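(* Let $F\colon\{0,1\}^n\to\{0,1\}^m$. Then $H(X\mid F(X))=\max_A H(A(X;R)\mid X)$, where the maximum is over all (computationally unbounded) $F$-collision-finders $A$, $X$ is uniform on $\{0,1\}^n$, and $R$ is uniformly random coin tosses for $A$.
   Context: An $F$-collision-finder is a randomized algorithm $A$ such that for every $x\in\{0,1\}^n$ and every coin tosses $r$, $A(x;r)\in F^{-1}(F(x))$. $H(\cdot\mid\cdot)$ is conditional Shannon entropy. *)

(* Defs.v *)
From HB Require Import structures.
From mathcomp Require Import all_boot all_order all_algebra.
From mathcomp Require Import all_classical all_reals exp.
Set Implicit Arguments. Unset Strict Implicit. Unset Printing Implicit Defensive.
Import Order.TTheory GRing.Theory Num.Theory.
Local Open Scope ring_scope.

Definition bits (n : nat) : finType := (n.-tuple bool : finType).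

Definition log2 {R : realType} (x : R) : R := ln x / ln 2.

(* Random variables Y : Om -> TY, Z : Om -> TZ on a finite sample space Om
   with the UNIFORM distribution. *)
Definition pjoint {R : realType} {Om TY TZ : finType}
  (Y : Om -> TY) (Z : Om -> TZ) (y : TY) (z : TZ) : R :=
  #|[set w : Om | (Y w == y) && (Z w == z)]|%:R / #|Om|%:R.

Definition pmarg {R : realType} {Om TZ : finType} (Z : Om -> TZ) (z : TZ) : R :=
  #|[set w : Om | Z w == z]|%:R / #|Om|%:R.

Definition cond_entropy (R : realType) {Om TY TZ : finType}
  (Y : Om -> TY) (Z : Om -> TZ) : R :=
  \sum_(y : TY) \sum_(z : TZ)
    (let p := pjoint (R:=R) Y Z y z in
     if p == 0 then 0 else p * log2 (pmarg (R:=R) Z z / p)).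

Definition collision_finder {n m : nat} {C : finType}
  (F : bits n -> bits m) (A : bits n -> C -> bits n) : Prop :=
  forall (x : bits n) (r : C), F (A x r) = F x.

(* H(A(X;R) | X) with X uniform on {0,1}^n and R uniform on C, independent. *)
Definition cf_entropy (R : realType) {n : nat} {C : finType}
  (A : bits n -> C -> bits n) : R :=
  cond_entropy R (fun w : bits n * C => A w.1 w.2) (fun w : bits n * C => w.1).

(* Main.v *)
Require Import Defs.
From HB Require Import structures.
From mathcomp Require Import all_boot all_order all_algebra.
From mathcomp Require Import all_classical all_reals exp.
From mathcomp Require Import zify.
Import Order.TTheory GRing.Theory Num.Theory.
Local Open Scope ring_scope.

Section S.
Variable R : realType.

Lemma ln_le_sub1 (t : R) : 0 < t -> ln t <= t - 1.
Proof.
move=> t0; have := @le_ln1Dx R (t - 1).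
rewrite addrCA subrr addr0; apply; rewrite ltrBrDl addrN //.
Qed.

Lemma ln2_gt0 : 0 < ln (2 : R).
Proof. by apply: ln_gt0; rewrite ltr1n. Qed.

Lemma card_marg (Om TY TZ : finType) (Y : Om -> TY) (Z : Om -> TZ) z :
  (\sum_(y : TY) #|[set w : Om | (Y w == y) && (Z w == z)]| =
   #|[set w : Om | Z w == z]|)%N.
Proof.
rewrite -sum1dep_card (partition_big Y xpredT) //=.
apply: eq_bigr => y _; rewrite -sum1dep_card; apply: eq_bigl => w.
by rewrite andbC.
Qed.

Lemma sum_pjoint (Om TY TZ : finType) (Y : Om -> TY) (Z : Om -> TZ) z :
  \sum_y pjoint (R:=R) Y Z y z = pmarg (R:=R) Z z.
Proof.
rewrite /pjoint /pmarg -mulr_suml -natr_sum card_marg //.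
Qed.

Lemma pjoint_ge0 (Om TY TZ : finType) (Y : Om -> TY) (Z : Om -> TZ) y z :
  0 <= pjoint (R:=R) Y Z y z.
Proof. by rewrite /pjoint divr_ge0. Qed.


Lemma term_le (p m s : R) : 0 <= p -> p <= m -> 0 < s ->
  (if p == 0 then 0 else p * log2 (m / p)) <= (p * ln s + m / s - p) / ln 2.
Proof.
move=> p0 pm s0; have l2 := ln2_gt0.
have m0 : 0 <= m by apply: le_trans pm.
case: eqP => [->|/eqP pn0].
  by rewrite mul0r subr0 add0r divr_ge0 // ?divr_ge0 // ltW.
have pp : 0 < p by rewrite lt_def pn0.
have mp : 0 < m by apply: lt_le_trans pm.
rewrite /log2 mulrA ler_pM2r ?invr_gt0 //.
have -> : m / p = (m / (p * s)) * s by rewrite invfM mulrA mulfVK // gt_eqF.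
have ps : 0 < m / (p * s) by rewrite divr_gt0 // mulr_gt0.
rewrite lnM ?posrE //.
have h := @ln_le_sub1 _ ps.
have : p * ln (m / (p * s)) <= p * (m / (p * s) - 1) by rewrite ler_pM2l.
have -> : p * (m / (p * s) - 1) = m / s - p.
  by rewrite mulrBr mulr1 invfM mulrA mulrCA -[p * m / s]mulrA mulKf.
rewrite mulrDr => h2.
by rewrite [X in X <= _]addrC -addrA lerD2l.
Qed.

Lemma gibbs (Om TY TZ : finType) (Y : Om -> TY) (Z : Om -> TZ) z (S : {set TY}) :
  (forall y, y \notin S -> pjoint (R:=R) Y Z y z = 0) -> (0 < #|S|)%N ->
  \sum_y (let p := pjoint (R:=R) Y Z y z in
          if p == 0 then 0 else p * log2 (pmarg (R:=R) Z z / p))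
  <= pmarg (R:=R) Z z * log2 (#|S|%:R : R).
Proof.
move=> HS S0.
set m := pmarg Z z; set s : R := #|S|%:R.
have s0 : 0 < s by rewrite ltr0n.
have l2 := ln2_gt0.
have sumS : \sum_(y in S) pjoint (R:=R) Y Z y z = m.
  rewrite /m -(@sum_pjoint _ _ _ Y Z z) [RHS](bigID (mem S)) /= [X in _ = _ + X]big1 ?addr0 //.
apply: (le_trans (y := \sum_y (if y \in S then
   (pjoint (R:=R) Y Z y z * ln s + m / s - pjoint (R:=R) Y Z y z) / ln 2 else 0))).
  apply: ler_sum => y _; case: ifP => yS.
    apply: term_le; rewrite ?pjoint_ge0 //.
    by rewrite /m -(@sum_pjoint _ _ _ Y Z z) (bigD1 y) //= lerDl sumr_ge0 // => i _; apply: pjoint_ge0.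
  by rewrite /= HS ?yS // eqxx.
rewrite -big_mkcond /= -mulr_suml !big_split /= -mulr_suml sumS.
rewrite sumr_const sumrN sumS -/s.
have -> : (m / s) *+ #|S| = m by rewrite -mulr_natr mulfVK // gt_eqF.
by rewrite addrK /log2 mulrA.
Qed.


Lemma gibbs_eq (Om TY TZ : finType) (Y : Om -> TY) (Z : Om -> TZ) z (S : {set TY}) :
  (forall y, pjoint (R:=R) Y Z y z =
             if y \in S then pmarg (R:=R) Z z / #|S|%:R else 0) ->
  (0 < #|S|)%N -> 0 < pmarg (R:=R) Z z ->
  \sum_y (let p := pjoint (R:=R) Y Z y z in
          if p == 0 then 0 else p * log2 (pmarg (R:=R) Z z / p))
  = pmarg (R:=R) Z z * log2 (#|S|%:R : R).
Proof.
move=> HS S0 m0.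
set m := pmarg Z z; set s : R := #|S|%:R.
have s0 : 0 < s by rewrite ltr0n.
rewrite (eq_bigr (fun y => if y \in S then m / s * log2 s else 0)).
  by rewrite -big_mkcond /= sumr_const -mulr_natr mulrAC -/s mulfVK ?gt_eqF.
move=> y _; rewrite /= HS -/m -/s; case: (y \in S); last by rewrite eqxx.
have ms : 0 < m / s by rewrite divr_gt0.
rewrite (gt_eqF ms).
by rewrite invf_div [m * (s / m)]mulrCA mulfV ?gt_eqF // mulr1.
Qed.

Lemma card_mod M s i : (s %| M)%N -> (i < s)%N ->
  #|[set r : 'I_M | (r %% s == i)%N]| = (M %/ s)%N.
Proof.
move=> dv lt.
have s0 : (0 < s)%N by apply: leq_ltn_trans lt.
set q := (M %/ s)%N.
have Mq : M = (q * s)%N by rewrite /q divnK.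
have fP : forall k : 'I_q, (i + k * s < M)%N.
  move=> k; rewrite Mq; have := ltn_ord k.
  move=> kq; nia.
transitivity #|[set Ordinal (fP k) | k : 'I_q]|.
  apply: eq_card => r; rewrite inE; apply/eqP/imsetP.
    move=> rs.
    have rq : (r %/ s < q)%N by rewrite ltn_divLR // -Mq.
    exists (Ordinal rq) => //; apply: val_inj => /=.
    by rewrite {1}(divn_eq r s) rs addnC.
  case=> k _ -> /=.
  by rewrite addnC modnMDl modn_small.
rewrite card_imset ?card_ord // => k1 k2 /(congr1 val) /= /eqP.
by rewrite eqn_add2l eqn_pmul2r // => /eqP /val_inj.
Qed.


Section Main.
Variables (n m : nat) (F : bits n -> bits m).
Notation T := (bits n).
Notation N := (#|T|%:R : R).
Definition Sx (x : T) : {set T} := [set y | F y == F x].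

Lemma Sx_gt0 x : (0 < #|Sx x|)%N.
Proof. by apply/card_gt0P; exists x; rewrite inE. Qed.

Lemma N_gt0 : 0 < N.
Proof.
have x : T by exact: [tuple of nseq n false].
by rewrite ltr0n; apply/card_gt0P; exists x.
Qed.

Lemma pjoint_cf_out (C : finType) (A : T -> C -> T) x y :
  collision_finder F A -> y \notin Sx x ->
  pjoint (R:=R) (fun w : T * C => A w.1 w.2) (fun w => w.1) y x = 0.
Proof.
move=> cf yS; rewrite /pjoint eq_card0 ?mul0r // => -[a r].
rewrite !inE /=; apply/negbTE; apply/andP => -[/eqP Ay /eqP ax].
by move: yS; rewrite inE -Ay ax cf eqxx.
Qed.

Lemma pmarg_fst (C : finType) x : (0 < #|C|)%N ->
  pmarg (R:=R) (fun w : T * C => w.1) x = N^-1.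
Proof.
move=> C0; rewrite /pmarg (eq_card (B := finset.setX [set x] [set: C])); last first.
  by move=> -[a r]; rewrite !inE andbT.
rewrite cardsX cards1 cardsT mul1n card_prod natrM invfM mulrCA mulfV ?mulr1 //.
by rewrite pnatr_eq0 -lt0n.
Qed.

Lemma rhs_eq : cond_entropy R (fun x : T => x) F =
  \sum_x N^-1 * log2 (#|Sx x|%:R : R).
Proof.
rewrite /cond_entropy; apply: eq_bigr => y _.
rewrite (bigD1 (F y)) //= big1 ?addr0; last first.
  move=> z zn; rewrite /pjoint eq_card0 ?mul0r ?eqxx // => w.
  rewrite !inE; apply/negbTE; apply/andP => -[/eqP -> /eqP Fz].
  by move: zn; rewrite Fz eqxx.
rewrite /pjoint (eq_card (B := [set y])); last first.
  by move=> w; rewrite !inE; case: eqP => // ->; rewrite eqxx.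
have N0 := N_gt0.
have N1 : 0 < N^-1 by rewrite invr_gt0.
rewrite cards1 mul1r (gt_eqF N1).
rewrite /pmarg invrK mulfVK ?gt_eqF //.
Qed.

Lemma part1 (C : finType) (A : T -> C -> T) :
  (0 < #|C|)%N -> collision_finder F A ->
  cf_entropy R A <= cond_entropy R (fun x : T => x) F.
Proof.
move=> C0 cf; rewrite /cf_entropy /cond_entropy exchange_big /= -/(cond_entropy R _ _).
rewrite rhs_eq; apply: ler_sum => x _.
rewrite -(pmarg_fst C x C0); apply: gibbs; last exact: Sx_gt0.
by move=> y; apply: pjoint_cf_out.
Qed.


Definition Mc := factorial #|T|.
Definition Acf (x : T) (r : 'I_Mc) : T :=
  nth x (enum (Sx x)) (r %% #|Sx x|).

Lemma Acf_in x r : Acf x r \in Sx x.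
Proof.
by rewrite /Acf -mem_enum mem_nth // -cardE ltn_pmod // Sx_gt0.
Qed.

Lemma Acf_cf : collision_finder F Acf.
Proof. by move=> x r; have := Acf_in x r; rewrite inE => /eqP. Qed.

Lemma Mc_gt0 : (0 < #|'I_Mc|)%N.
Proof. by rewrite card_ord /Mc fact_gt0. Qed.

Lemma dvd_Mc x : (#|Sx x| %| Mc)%N.
Proof. by rewrite /Mc dvdn_fact // Sx_gt0 max_card. Qed.

Lemma pjoint_Acf x y : pjoint (R:=R) (fun w : T * 'I_Mc => Acf w.1 w.2) (fun w => w.1) y x =
  if y \in Sx x then pmarg (R:=R) (fun w : T * 'I_Mc => w.1) x / #|Sx x|%:R else 0.
Proof.
case: ifP => yS; last by apply: pjoint_cf_out; [apply: Acf_cf| rewrite yS].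
rewrite (pmarg_fst _ x Mc_gt0) /pjoint.
set e := enum (Sx x); set s := #|Sx x|.
have ye : y \in e by rewrite mem_enum.
have se : size e = s by rewrite /e /s cardE.
rewrite (eq_card (B := finset.setX [set x] [set r : 'I_Mc | (r %% s == index y e)%N]));
  last first.
  move=> -[a r]; rewrite !inE /=; case: (eqVneq a x) => [->|]; last by rewrite andbF.
  rewrite andbT /Acf -/e -/s.
  rewrite -{1}(nth_index x ye) nth_uniq ?enum_uniq // ?se ?ltn_pmod ?Sx_gt0 //.
  by rewrite -se index_mem.
rewrite cardsX cards1 mul1n card_mod ?dvd_Mc //; last by rewrite -se index_mem.
rewrite card_prod card_ord.
have s0 : (0 < s)%N by apply: Sx_gt0.
have Mq : Mc = (Mc %/ s * s)%N by rewrite divnK ?dvd_Mc.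
rewrite [in (#|T| * Mc)%N]Mq !natrM.
have N0 := N_gt0.
have q0 : ((Mc %/ s)%:R : R) != 0.
  rewrite pnatr_eq0 -lt0n divn_gt0 // dvdn_leq //; [exact: fact_gt0 | exact: dvd_Mc].
by rewrite !invfM mulrCA mulVKf.
Qed.


Lemma part2 : cf_entropy R Acf = cond_entropy R (fun x : T => x) F.
Proof.
rewrite /cf_entropy /cond_entropy exchange_big /= -/(cond_entropy R _ _).
rewrite rhs_eq; apply: eq_bigr => x _.
rewrite -(pmarg_fst _ x Mc_gt0); apply: gibbs_eq.
- exact: pjoint_Acf.
- exact: Sx_gt0.
- by rewrite (pmarg_fst _ x Mc_gt0) invr_gt0 N_gt0.
Qed.

End Main.
End S.

Theorem proposition3p4 (R : realType) (n m : nat) (F : bits n -> bits m) :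
  (forall (C : finType) (A : bits n -> C -> bits n),
      (0 < #|C|)%N -> collision_finder F A ->
      cf_entropy R A <= cond_entropy R (fun x : bits n => x) F)
  /\
  (exists (C : finType) (A : bits n -> C -> bits n),
      [/\ (0 < #|C|)%N, collision_finder F A &
          cf_entropy R A = cond_entropy R (fun x : bits n => x) F]).
Proof.
split.
  by move=> C A C0 cf; apply: part1.
exists ('I_(Mc n) : finType), (@Acf n m F); split.
- exact: Mc_gt0.
- exact: Acf_cf.
- exact: part2.
Qed.
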